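(* Let $k\geq 2$ and $\ell\geq 3$ be fixed integers. Let $p\geq\frac{\log n}{\sqrt n}$ and $G\in\mathcal{G}_{k,n,p}$, and let $X=X_0,X_1,\dots$ be a simple random walk on $G$ starting at $w\in V(G)$. Then for all $x\in V(G)$, \[ \mathbb{P}_w[X_2=x]=\begin{cases}\frac1n\pm\mathcal{O}\!\left(\frac{\sqrt{\log n}}{pn^{3/2}}\right)&\text{if }x\neq w,\\[2pt] \frac{1}{pn}\pm\mathcal{O}\!\left(\frac{\sqrt{\log n}}{p^{3/2}n^{3/2}}\right)&\text{if }x=w,\end{cases} \] and \[ \mathbb{P}_w[X_\ell=x]=\frac1n\pm\mathcal{O}\!\left(\frac{\sqrt{\log n}}{pn^{3/2}}\right). \]
   Context: For $p=p(n)$ with $\frac{\log n}{n^{(k-1)/k}}\le p\le 1-\Omega(\frac{\log^4 n}{n})$, $\mathcal{G}_{k,n,p}$ denotes the set of graphs $G$ on $n$ vertices satisfying: (i) $G$ is not bipartite; (ii) $\operatorname{diam}(G)\le k$; (iii) every vertex has degree $d(v)=pn\pm\mathcal{O}(\sqrt{pn\log n})$; (iv) $2|E(G)|=pn^2\pm\mathcal{O}(\sqrt{pn^2\log n})$; (v) $|N(v)\cap N(w)|=p^2n\pm\mathcal{O}(\max\{\sqrt{p^2n\log n},\log n\})$ for all $v\ne w$; (vi) the unit eigenvector $\phi$ of the largest adjacency eigenvalue has entries $\phi_i=\frac1{\sqrt n}\pm\mathcal{O}(\frac{\log^{3/2}n}{\sqrt p\,n\log(pn)})$; (vii) $\lambda_1=(1+o(1))pn$;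 (viii) $\max\{|\lambda_2|,|\lambda_n|\}=\mathcal{O}(\sqrt{pn})$, where $\lambda_1\ge\dots\ge\lambda_n$ are the adjacency eigenvalues. Asymptotic notation is as $n\to\infty$ with constants independent of $n$. $\mathbb{P}_w[\cdot]=\mathbb{P}[\cdot\mid X_0=w]$. *)

(* Defs.v *)
From mathcomp Require Import all_boot all_order all_algebra.
From mathcomp Require Import all_classical all_reals all_analysis.
Set Implicit Arguments. Unset Strict Implicit. Unset Printing Implicit Defensive.
Import Order.TTheory GRing.Theory Num.Theory.
Local Open Scope ring_scope.

Section Defs.
Variable R : realType.
Variable n : nat.

Definition simple_graph (e : rel 'I_n) : Prop :=
  (forall u v, e u v = e v u) /\ (forall u, ~~ e u u).

Definition adjmx (e : rel 'I_n) : 'M[R]_n := \matrix_(i, j) (e i j)%:R.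

Definition deg (e : rel 'I_n) (v : 'I_n) : nat := #|[set u | e v u]|.

Definition codeg (e : rel 'I_n) (v w : 'I_n) : nat := #|[set u | e v u & e w u]|.

Definition twice_edges (e : rel 'I_n) : nat := \sum_(v : 'I_n) deg e v.

Definition bipartite (e : rel 'I_n) : Prop :=
  exists f : 'I_n -> bool, forall u v, e u v -> f u != f v.

Definition diam_le (e : rel 'I_n) (k : nat) : Prop :=
  forall u v : 'I_n, exists s : seq 'I_n,
    [/\ (size s <= k)%N, path e u s & last u s = v].

(* s is the list of adjacency eigenvalues (with multiplicity), in
   nonincreasing order: lambda_1 = s`_0 >= ... >= lambda_n = s`_(n-1). *)
Definition adj_spectrum (e : rel 'I_n) (s : seq R) : Prop :=
  sorted (>=%R) s /\ char_poly (adjmx e) = \prod_(a <- s) ('X - a%:P).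

Definition srw_mx (e : rel 'I_n) : 'M[R]_n :=
  \matrix_(i, j) ((e i j)%:R / (deg e i)%:R).

Definition srw_prob (e : rel 'I_n) (t : nat) (w x : 'I_n) : R :=
  (srw_mx e ^+ t) w x.

(* Membership in G_{k,n,p}, where C > 0 is the (fixed) constant hidden in all
   the O(.) terms of (iii)-(vi),(viii), and eps is the o(1) function of (vii). *)
Definition inGknp (k : nat) (p C : R) (eps : nat -> R) (e : rel 'I_n) : Prop :=
  let nR := n%:R : R in
  [/\ ~ bipartite e /\ diam_le e k,
      (forall v, `|(deg e v)%:R - p * nR| <= C * Num.sqrt (p * nR * ln nR)),
      `|(twice_edges e)%:R - p * nR ^+ 2| <= C * Num.sqrt (p * nR ^+ 2 * ln nR),
      (forall v w, v != w ->
         `|(codeg e v w)%:R - p ^+ 2 * nR| <=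
            C * Num.max (Num.sqrt (p ^+ 2 * nR * ln nR)) (ln nR)) &
      exists s : seq R, adj_spectrum e s /\
      [/\ (exists phi : 'cV[R]_n,
             [/\ adjmx e *m phi = s`_0 *: phi,
                 \sum_i phi i 0 ^+ 2 = 1 &
                 forall i, `|phi i 0 - (Num.sqrt nR)^-1| <=
                   C * (ln nR `^ (3/2)) / (Num.sqrt p * nR * ln (p * nR))]),
          `|s`_0 - p * nR| <= eps n * (p * nR) &
          Num.max `|s`_1| `|s`_n.-1| <= C * Num.sqrt (p * nR)]].

End Defs.

(* Main.v *)
Require Import Defs.
From mathcomp Require Import all_boot all_order all_algebra.
From mathcomp Require Import all_classical all_reals all_analysis.
From mathcomp Require Import ring lra zify.
Import Order.TTheory GRing.Theory Num.Theory numFieldNormedType.Exports.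
Local Open Scope ring_scope.
Section Comb.
Variable R : realType.
Variable n : nat.
Variable e : rel 'I_n.
Hypothesis degpos : forall v, (0 < deg e v)%N.
Hypothesis esym : forall u v, e u v = e v u.

Let M := srw_mx R e.

Lemma card_sum_pred (P : pred 'I_n) : \sum_u (P u)%:R = #|[set u | P u]|%:R :> R.
Proof.
rewrite -natr_sum; congr (_%:R).
rewrite -sum1_card [RHS]big_mkcond /=; apply: eq_bigr => i _; rewrite inE; by case: (P i).
Qed.

Lemma M_ge0 u v : 0 <= M u v.
Proof. by rewrite /M /srw_mx mxE divr_ge0. Qed.

Lemma M_row1 w : \sum_u M w u = 1.
Proof.
rewrite /M /srw_mx; under eq_bigr do rewrite mxE.
rewrite -mulr_suml card_sum_pred -/(deg e w) divff // pnatr_eq0 -lt0n; exact: degpos.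
Qed.

Lemma Mpow_ge0 m u v : 0 <= (M ^+ m) u v.
Proof.
elim: m u v => [|m IH] u v; first by rewrite expr0 mxE ler0n.
rewrite exprS -mulmxE mxE; apply: sumr_ge0 => y _; apply: mulr_ge0 => //; exact: M_ge0.
Qed.

Lemma Mpow_row1 m w : \sum_u (M ^+ m) w u = 1.
Proof.
elim: m w => [|m IH] w.
  rewrite expr0 (bigD1 w) //= mxE eqxx big1 ?addr0 // => i /negPf ne.
  by rewrite mxE eq_sym ne.
rewrite exprSr -mulmxE.
under eq_bigr do rewrite mxE.
rewrite exchange_big /=.
rewrite -(IH w); apply: eq_bigr => y _.
by rewrite -mulr_sumr M_row1 mulr1.
Qed.

Lemma Mpow_le m w x B : (forall y, M y x <= B) -> (M ^+ m.+1) w x <= B.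
Proof.
move=> HB; rewrite exprSr -mulmxE mxE.
apply: (@le_trans _ _ (\sum_y (M ^+ m) w y * B)).
  apply: ler_sum => y _; apply: ler_wpM2l => //; exact: Mpow_ge0.
by rewrite -mulr_suml Mpow_row1 mul1r.
Qed.

Lemma M2E w x : (M ^+ 2) w x =
  (deg e w)%:R^-1 * \sum_u (e w u && e x u)%:R / (deg e u)%:R.
Proof.
rewrite expr2 -mulmxE mxE mulr_sumr; apply: eq_bigr => u _.
rewrite /M /srw_mx !mxE (esym u x).
by case: (e w u); case: (e x u); rewrite /= ?mul0r ?mulr0 ?mul1r ?mulr1 // mulrC.
Qed.

Lemma M2_approx w x (q d : R) : 0 < q ->
  (forall u, `|(deg e u)%:R^-1 - q^-1| <= d) ->
  `|(M ^+ 2) w x - (codeg e w x)%:R / ((deg e w)%:R * q)| <=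
     (codeg e w x)%:R * d / (deg e w)%:R.
Proof.
move=> q0 Hd.
have dw0 : 0 < (deg e w)%:R :> R by rewrite ltr0n degpos.
have cE : (codeg e w x)%:R = \sum_u (e w u && e x u)%:R :> R.
  by rewrite card_sum_pred.
have -> : (M ^+ 2) w x - (codeg e w x)%:R / ((deg e w)%:R * q) =
  (deg e w)%:R^-1 * \sum_u (e w u && e x u)%:R * ((deg e u)%:R^-1 - q^-1).
  rewrite M2E cE invfM mulrA [_ * (deg e w)%:R^-1]mulrC -mulrA -mulrBr; congr (_ * _).
  rewrite mulr_suml -sumrB; apply: eq_bigr => u _; by rewrite mulrBr.
rewrite normrM ger0_norm ?invr_ge0 ?ler0n //.
rewrite [leRHS]mulrC ler_pM2l ?invr_gt0 //.
apply: (le_trans (ler_norm_sum _ _ _)).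
rewrite cE mulr_suml; apply: ler_sum => u _.
rewrite normrM ger0_norm ?ler0n //; apply: ler_wpM2l => //.
Qed.

Lemma Ml_approx m w x (z E B : R) : 0 <= z -> 0 <= E ->
  (forall y, y != x -> `|(M ^+ 2) y x - z| <= E) -> (forall y, M y x <= B) ->
  `|(M ^+ (m.+1 + 2)) w x - z| <= E + B * (B + z).
Proof.
move=> z0 E0 HE HB.
set P := M ^+ m.+1.
have HP : forall y, 0 <= P w y := fun y => Mpow_ge0 _ _ _.
have -> : (M ^+ (m.+1 + 2)) w x - z = \sum_y P w y * ((M ^+ 2) y x - z).
  rewrite exprD -mulmxE mxE -/P.
  under [in RHS]eq_bigr do rewrite mulrBr.
  by rewrite sumrB -mulr_suml Mpow_row1 mul1r.
rewrite (bigD1 x) //=.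
apply: (le_trans (ler_normD _ _)); rewrite addrC; apply: lerD.
  apply: (le_trans (ler_norm_sum _ _ _)).
  apply: (@le_trans _ _ (\sum_y P w y * E)).
    rewrite [leRHS](bigD1 x) //= -[X in X <= _]add0r; apply: lerD.
      by rewrite mulr_ge0.
    apply: ler_sum => y yx; rewrite normrM ger0_norm //; apply: ler_wpM2l => //.
    exact: HE.
  by rewrite -mulr_suml Mpow_row1 mul1r.
have P2ge0 := Mpow_ge0 2 x x.
rewrite normrM ger0_norm //; apply: ler_pM => //.
  exact: Mpow_le.
apply: (le_trans (ler_normB _ _)); rewrite ger0_norm // ger0_norm //.
apply: lerD => //; exact: (Mpow_le 1).
Qed.

End Comb.
Set Implicit Arguments.
Section Real.
Variable R : realType.

Definition basic (C a s u : R) :=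
  0 < C /\ 0 < a /\ a <= 1 /\ 1 <= u /\ u ^+ 2 <= a ^+ 2 * s /\ 4 * C ^+ 2 <= s.

Lemma s_pos C a s u : basic C a s u -> 0 < s.
Proof. case=> C0 [a0 [a1 [u1 [ua sC]]]]. have h : 0 < C ^+ 2 by rewrite exprn_gt0. lra. Qed.

Lemma u_le C a s u : basic C a s u -> u <= a ^+ 2 * s.
Proof. case=> C0 [a0 [a1 [u1 [ua sC]]]]. nra. Qed.

Lemma Cu_le C a s u : basic C a s u -> 2 * C * u <= a * s.
Proof.
move=> b; have s0 := s_pos b; case: b => C0 [a0 [a1 [u1 [ua sC]]]].
have h : (2 * C * u) ^+ 2 <= (a * s) ^+ 2 by nra.
have h0 : 0 <= a * s by nra.
have h1 : 0 <= 2 * C * u by nra.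
nra.
Qed.

Lemma D_half C a s u (D : R) : basic C a s u ->
  `|D - a ^+ 2 * s ^+ 2| <= C * (a * s * u) -> a ^+ 2 * s ^+ 2 / 2 <= D.
Proof.
move=> b /ler_normlP [h1 h2]. have := Cu_le b. have s0 := s_pos b.
case: b => C0 [a0 [a1 [u1 [ua sC]]]]. nra.
Qed.

Lemma D_inv C a s u (D : R) : basic C a s u ->
  `|D - a ^+ 2 * s ^+ 2| <= C * (a * s * u) ->
  `|D^-1 - (a ^+ 2 * s ^+ 2)^-1| <= 2 * C * u / (a ^+ 3 * s ^+ 3).
Proof.
move=> b hD; have Dh := D_half D b hD; have s0 := s_pos b.
case: b => C0 [a0 [a1 [u1 [ua sC]]]].
set q := a ^+ 2 * s ^+ 2.
have q0 : 0 < q by rewrite /q; apply: mulr_gt0; apply: exprn_gt0.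
have D0 : 0 < D by apply: lt_le_trans Dh; rewrite divr_gt0.
have -> : D^-1 - q^-1 = (q - D) / (D * q).
  by field; apply/andP; split; rewrite gt_eqF.
rewrite normrM normfV (gtr0_norm (mulr_gt0 D0 q0)) ler_pdivrMr ?mulr_gt0 //.
have X0 : 0 <= 2 * C * u / (a ^+ 3 * s ^+ 3).
  apply: divr_ge0; first nra. by apply: mulr_ge0; apply: exprn_ge0; lra.
have e : 2 * C * u / (a ^+ 3 * s ^+ 3) * (q / 2 * q) = C * (a * s * u).
  by rewrite /q; field; rewrite (gt_eqF s0) (gt_eqF a0).
rewrite /q distrC; apply: (le_trans hD); rewrite -e.
apply: ler_wpM2l => //; rewrite ler_pM2r //.
Qed.

Lemma xneq_bound C a s u (D c : R) : basic C a s u ->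
  `|D - a ^+ 2 * s ^+ 2| <= C * (a * s * u) -> 0 <= c ->
  `|c - a ^+ 4 * s ^+ 2| <= C * (a ^+ 2 * s * u + u ^+ 2) ->
  c * (2 * C * u / (a ^+ 3 * s ^+ 3)) / D +
  `|c / (D * (a ^+ 2 * s ^+ 2)) - (s ^+ 2)^-1| <=
    (8 * C ^+ 2 + 10 * C) * u / (a ^+ 2 * s ^+ 3).
Proof.
move=> b hD c0 hc; have Dh := D_half D b hD; have s0 := s_pos b.
have ul := u_le b.
case: b => C0 [a0 [a1 [u1 [ua sC]]]].
have q0 : 0 < a ^+ 2 * s ^+ 2 by apply: mulr_gt0; apply: exprn_gt0.
have D0 : 0 < D by apply: lt_le_trans Dh; rewrite divr_gt0.
have a0' : 0 <= a := ltW a0. have s0' : 0 <= s := ltW s0. have C0' : 0 <= C := ltW C0.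
have u0 : 0 <= u by lra.
have an0 : a != 0 by rewrite gt_eqF.
have sn0 : s != 0 by rewrite gt_eqF.
have Dn0 : D != 0 by rewrite gt_eqF.
have -> : c / (D * (a ^+ 2 * s ^+ 2)) - (s ^+ 2)^-1 =
   (c - D * a ^+ 2) / (D * (a ^+ 2 * s ^+ 2)).
  by field; rewrite an0 sn0 Dn0.
rewrite normrM normfV (gtr0_norm (mulr_gt0 D0 q0)).
set X := `|c - D * a ^+ 2|.
have X0 : 0 <= X by rewrite /X normr_ge0.
have -> : c * (2 * C * u / (a ^+ 3 * s ^+ 3)) / D + X / (D * (a ^+ 2 * s ^+ 2)) =
   (2 * C * u * c + a * s * X) / (a ^+ 3 * s ^+ 3 * D).
  by field; rewrite an0 sn0 Dn0.
have p0 : 0 < a ^+ 3 * s ^+ 3 * D by rewrite !mulr_gt0 // exprn_gt0.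
rewrite ler_pdivrMr //.
have -> : (8 * C ^+ 2 + 10 * C) * u / (a ^+ 2 * s ^+ 3) * (a ^+ 3 * s ^+ 3 * D)
   = (8 * C ^+ 2 + 10 * C) * u * a * D.
  by field; rewrite an0 sn0.
have hX : X <= C * (a ^+ 2 * s * u + u ^+ 2) + a ^+ 2 * (C * (a * s * u)).
  rewrite /X.
  have -> : c - D * a ^+ 2 = (c - a ^+ 4 * s ^+ 2) + a ^+ 2 * (a ^+ 2 * s ^+ 2 - D) by ring.
  apply: (le_trans (ler_normD _ _)); apply: lerD => //.
  rewrite normrM ger0_norm ?exprn_ge0 // distrC.
  by apply: ler_wpM2l => //; rewrite exprn_ge0.
have f1 : c <= (1 + 2 * C) * a ^+ 4 * s ^+ 2.
  have h1 : a ^+ 2 * s * u <= a ^+ 4 * s ^+ 2.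
    have -> : a ^+ 4 * s ^+ 2 = (a ^+ 2 * s) * (a ^+ 2 * s) by ring.
    by apply: ler_wpM2l => //; rewrite mulr_ge0 // exprn_ge0.
  have h2 : u ^+ 2 <= a ^+ 4 * s ^+ 2.
    have -> : a ^+ 4 * s ^+ 2 = (a ^+ 2 * s) ^+ 2 by ring.
    by rewrite ler_pXn2r // ?nnegrE ?mulr_ge0 ?exprn_ge0 //; lra.
  move: hc => /ler_normlP [_ hc]. nra.
have a34 : a ^+ 4 <= a ^+ 3.
  rewrite exprSr -[leRHS]mulr1; apply: ler_wpM2l => //; by rewrite exprn_ge0.
have f2 : 2 * C * u * c <= 2 * C * (1 + 2 * C) * u * a ^+ 3 * s ^+ 2.
  have h : c <= (1 + 2 * C) * a ^+ 3 * s ^+ 2.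
    have k0 : 0 <= (1 + 2 * C) * s ^+ 2 by rewrite mulr_ge0 ?exprn_ge0 //; lra.
    have := ler_wpM2l k0 a34. move=> k.
    have e1 : (1 + 2 * C) * a ^+ 4 * s ^+ 2 = (1 + 2 * C) * s ^+ 2 * a ^+ 4 by ring.
    have e2 : (1 + 2 * C) * a ^+ 3 * s ^+ 2 = (1 + 2 * C) * s ^+ 2 * a ^+ 3 by ring.
    by rewrite e2; apply: le_trans k; rewrite -e1.
  have hh : 0 <= 2 * C * u by nra.
  have := ler_wpM2l hh h. move=> h'. apply: (le_trans h'). rewrite !mulrA. lra.
have f3 : a * s * X <= 3 * C * u * a ^+ 3 * s ^+ 2.
  have as0 : 0 <= a * s by rewrite mulr_ge0.
  have := ler_wpM2l as0 hX => h'. apply: (le_trans h').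
  have e1 : a * s * (C * (a ^+ 2 * s * u + u ^+ 2) + a ^+ 2 * (C * (a * s * u))) =
     C * u * (a ^+ 3 * s ^+ 2) + C * u * (a * s * u) + C * u * (a ^+ 4 * s ^+ 2) by ring.
  rewrite e1.
  have g1 : a * s * u <= a ^+ 3 * s ^+ 2.
    have -> : a ^+ 3 * s ^+ 2 = a * s * (a ^+ 2 * s) by ring.
    by apply: ler_wpM2l.
  have g2 : a ^+ 4 * s ^+ 2 <= a ^+ 3 * s ^+ 2 by rewrite ler_pM2r // exprn_gt0.
  have Cu0 : 0 <= C * u by nra.
  have := ler_wpM2l Cu0 g1; have := ler_wpM2l Cu0 g2. lra.
have f4 : (4 * C ^+ 2 + 5 * C) * u * a ^+ 3 * s ^+ 2 <= (8 * C ^+ 2 + 10 * C) * u * a * D.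
  have K0 : 0 <= (8 * C ^+ 2 + 10 * C) * u * a.
    by rewrite !mulr_ge0 //; nra.
  have := ler_wpM2l K0 Dh => h'. apply: (le_trans _ h'); rewrite le_eqVlt; apply/orP; left; apply/eqP; field.
lra.
lra.
Qed.

Lemma Dinv_le C a s u (D : R) : basic C a s u ->
  `|D - a ^+ 2 * s ^+ 2| <= C * (a * s * u) -> D^-1 <= 2 / (a ^+ 2 * s ^+ 2).
Proof.
move=> b hD; have Dh := D_half D b hD; have s0 := s_pos b.
case: b => C0 [a0 [a1 [u1 [ua sC]]]].
have q0 : 0 < a ^+ 2 * s ^+ 2 by apply: mulr_gt0; apply: exprn_gt0.
have D0 : 0 < D by apply: lt_le_trans Dh; rewrite divr_gt0.
rewrite -[D^-1]mul1r ler_pdivrMr // mulrAC ler_pdivlMr // mul1r.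
lra.
Qed.

Lemma extra_bound C a s u : basic C a s u ->
  2 / (a ^+ 2 * s ^+ 2) * (2 / (a ^+ 2 * s ^+ 2) + (s ^+ 2)^-1) <=
    6 * u / (a ^+ 2 * s ^+ 3).
Proof.
move=> b; have s0 := s_pos b; have ul := u_le b.
case: b => C0 [a0 [a1 [u1 [ua sC]]]].
have -> : 2 / (a ^+ 2 * s ^+ 2) * (2 / (a ^+ 2 * s ^+ 2) + (s ^+ 2)^-1) =
  (4 + 2 * a ^+ 2) / (a ^+ 4 * s ^+ 4).
  by field; rewrite !gt_eqF.
have p0 : 0 < a ^+ 4 * s ^+ 4 by apply: mulr_gt0; apply: exprn_gt0.
rewrite ler_pdivrMr //.
have -> : 6 * u / (a ^+ 2 * s ^+ 3) * (a ^+ 4 * s ^+ 4) = 6 * (u * (a ^+ 2 * s)).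
  by field; rewrite !gt_eqF.
have h1 : 1 <= u * (a ^+ 2 * s) by nra.
have h2 : a ^+ 2 <= 1 by nra.
lra.
Qed.

End Real.
Unset Implicit Arguments.

Lemma powR32 (R : realType) (x : R) : 0 <= x -> x `^ (3 / 2) = Num.sqrt x ^+ 3.
Proof.
move=> x0.
have -> : (3 / 2 : R) = 1 + 2^-1 by field.
rewrite powRD; last by apply/implyP => /eqP h; exfalso; lra.
rewrite powRr1 // powR12_sqrt // -{1}(sqr_sqrtr x0); ring.
Qed.

Local Open Scope classical_set_scope.
Local Open Scope ring_scope.

Theorem lemma6p4 (R : realType) (k l : nat) (C : R) (eps : nat -> R)
    (p : nat -> R) :
  (2 <= k)%N -> (3 <= l)%N -> 0 < C ->
  eps @ \oo --> (0 : R) ->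
  (* standing range of p = p(n) *)
  (exists c : R, 0 < c /\ exists N0 : nat, forall n : nat, (N0 <= n)%N ->
     ln (n%:R : R) / (n%:R `^ ((k%:R - 1) / k%:R)) <= p n /\
     p n <= 1 - c * (ln (n%:R : R) ^+ 4 / n%:R)) ->
  (* p >= log n / sqrt n *)
  (exists N1 : nat, forall n : nat, (N1 <= n)%N ->
     ln (n%:R : R) / Num.sqrt (n%:R) <= p n) ->
  exists C' : R, 0 < C' /\ exists N : nat, forall n : nat, (N <= n)%N ->
    forall e : rel 'I_n, simple_graph e -> inGknp k (p n) C eps e ->
    forall w x : 'I_n,
      [/\ (x != w -> `|srw_prob R e 2 w x - (n%:R)^-1| <=
             C' * Num.sqrt (ln (n%:R : R)) / (p n * n%:R `^ (3/2))),
          (x = w -> `|srw_prob R e 2 w x - (p n * n%:R)^-1| <=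
             C' * Num.sqrt (ln (n%:R : R)) / ((p n) `^ (3/2) * n%:R `^ (3/2))) &
          `|srw_prob R e l w x - (n%:R)^-1| <=
             C' * Num.sqrt (ln (n%:R : R)) / (p n * n%:R `^ (3/2))].
Proof.
move=> k2 l3 C0 _ [c0 [c0pos [N0 H0]]] [N1 H1].
exists (8 * C ^+ 2 + 12 * C + 6); split.
  have : 0 <= C ^+ 2 by rewrite exprn_ge0 // ltW.
  lra.
exists (maxn (maxn N0 N1) (maxn (Num.truncn (expR (1 : R))).+1 (Num.truncn (16 * C ^+ 4)).+1)).
move=> n hn e [esym eirr] hG w x.
move: hn; rewrite !geq_max => /andP[/andP[hN0 hN1] /andP[hnE hn16]].
have hE : expR 1 <= n%:R :> R.
  apply: (le_trans (ltW (truncnS_gt _))); by rewrite ler_nat.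
have h16 : 16 * C ^+ 4 <= n%:R :> R.
  apply: (le_trans (ltW (truncnS_gt _))); by rewrite ler_nat.
set nR := n%:R : R.
have nR0 : 0 < nR by apply: lt_le_trans hE; rewrite expR_gt0.
set L := ln nR.
have L1 : 1 <= L.
  rewrite /L -[1](expRK 1) ler_ln // ?posrE ?expR_gt0 //.
have [_ hp1] := H0 n hN0.
have hp2 := H1 n hN1.
rewrite -/nR -/L in hp1 hp2.
set q := p n in hp1 hp2 *.
have pl1 : q <= 1.
  have : 0 <= c0 * (L ^+ 4 / nR).
    by rewrite mulr_ge0 ?divr_ge0 ?exprn_ge0 // ltW // (lt_le_trans _ L1).
  lra.
set s : R := Num.sqrt nR.
have s0 : 0 < s by rewrite sqrtr_gt0.
have q0 : 0 < q by apply: lt_le_trans hp2; rewrite divr_gt0 // (lt_le_trans _ L1).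
set a : R := Num.sqrt q. set u : R := Num.sqrt L.
have qa : q = a ^+ 2 by rewrite sqr_sqrtr // ltW.
have ns : nR = s ^+ 2 by rewrite sqr_sqrtr // ltW.
have Lu : L = u ^+ 2 by rewrite sqr_sqrtr // (le_trans _ L1).
have a0 : 0 < a by rewrite sqrtr_gt0.
have b : @basic R C a s u.
  split => //; split => //; split.
    by rewrite /a -sqrtr1 ler_sqrt.
  split; first by rewrite /u -sqrtr1 ler_sqrt // (le_trans _ L1).
  split.
    by rewrite -Lu -qa -ler_pdivrMr.
  have h4 : 0 <= 4 * C ^+ 2 by rewrite mulr_ge0 ?exprn_ge0 // ltW.
  rewrite -(ger0_norm h4) -sqrtr_sqr /s ler_sqrt //.
  apply: le_trans h16. rewrite le_eqVlt; apply/orP; left; apply/eqP; ring.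
move: hG; rewrite /inGknp -/nR -/L -/q => -[_ hdeg _ hcod _].
have L0 : 0 <= L by apply: le_trans L1.
have q0' : 0 <= q := ltW q0. have nR0' : 0 <= nR := ltW nR0.
have hD : forall v, `|(deg e v)%:R - a ^+ 2 * s ^+ 2| <= C * (a * s * u).
  move=> v; have := hdeg v.
  have -> : Num.sqrt (q * nR * L) = a * s * u.
    by rewrite sqrtrM ?mulr_ge0 // sqrtrM.
  by rewrite qa ns.
have hc : forall v w, v != w ->
    `|(codeg e v w)%:R - a ^+ 4 * s ^+ 2| <= C * (a ^+ 2 * s * u + u ^+ 2).
  move=> v w' vw; have h := hcod v w' vw.
  have e1 : Num.sqrt (q ^+ 2 * nR * L) = q * s * u.
    by rewrite sqrtrM ?mulr_ge0 ?exprn_ge0 // sqrtrM ?exprn_ge0 // sqrtr_sqr ger0_norm.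
  rewrite e1 in h.
  have e2 : a ^+ 4 * s ^+ 2 = q ^+ 2 * nR by rewrite qa ns -exprM.
  rewrite e2; apply: (le_trans h); apply: ler_wpM2l; first exact: ltW.
  rewrite ge_max; apply/andP; split.
    rewrite -qa lerDl; exact: sqr_ge0.
  rewrite -Lu lerDr -qa mulr_ge0 // ?mulr_ge0 ?sqrtr_ge0 //.
rewrite /srw_prob powR32 // powR32 // -/a -/s qa ns.
have qp : 0 < a ^+ 2 * s ^+ 2 by rewrite mulr_gt0 // exprn_gt0.
have degpos : forall v, (0 < deg e v)%N.
  move=> v; have := D_half (deg e v)%:R b (hD v).
  move=> h; rewrite -(ltr0n R); apply: lt_le_trans h; by rewrite divr_gt0.
have Dinvs := fun v => D_inv (deg e v)%:R b (hD v).
set Z2 := a ^+ 2 * s ^+ 3. set Z3 := a ^+ 3 * s ^+ 3.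
have Z2p : 0 < Z2 by rewrite /Z2 mulr_gt0 // exprn_gt0.
have Z3p : 0 < Z3 by rewrite /Z3 mulr_gt0 // exprn_gt0.
have u0 : 0 < u by apply: lt_le_trans (_ : 0 < 1) _ => //; case: b => _ [_ [_ [? _]]].
have C2 : 0 <= C ^+ 2 by exact: sqr_ge0.
have hx : forall w0 x0, x0 != w0 ->
    `|(srw_mx R e ^+ 2) w0 x0 - (s ^+ 2)^-1| <= (8 * C ^+ 2 + 10 * C) * u / Z2.
  move=> w0 x0 ne.
  have h1 := @M2_approx R n e degpos esym w0 x0 _ _ qp Dinvs.
  have ne' : w0 != x0 by rewrite eq_sym.
  have h2 := xneq_bound (deg e w0)%:R (codeg e w0 x0)%:R b (hD w0) (ler0n _ _) (hc w0 x0 ne').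
  apply: (le_trans (ler_distD _ _ _)); apply: le_trans h2; apply: lerD => //.
  exact: h1.
have Kle : forall K1 K2 : R, K1 <= K2 -> forall Z, 0 < Z -> K1 * u / Z <= K2 * u / Z.
  by move=> K1 K2 hK Z Zp; rewrite ler_pM2r ?invr_gt0 // ler_pM2r.
have hK : 8 * C ^+ 2 + 10 * C <= 8 * C ^+ 2 + 12 * C + 6 by lra.
have hK3 : 2 * C <= 8 * C ^+ 2 + 12 * C + 6.
  rewrite -subr_ge0. have -> : 8 * C ^+ 2 + 12 * C + 6 - 2 * C = 8 * C ^+ 2 + 10 * C + 6 by ring.
  by rewrite !addr_ge0 ?mulr_ge0 // ltW.
split.
- move=> ne; apply: le_trans (hx w x ne) _; exact: Kle.
- move=> ->.
  have h1 := @M2_approx R n e degpos esym w w _ _ qp Dinvs.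
  have cE : codeg e w w = deg e w.
    by rewrite /codeg /deg; apply: eq_card => y; rewrite !inE andbb.
  rewrite cE in h1.
  have D0 : (deg e w)%:R != 0 :> R by rewrite pnatr_eq0 -lt0n degpos.
  have e1 : (deg e w)%:R / ((deg e w)%:R * (a ^+ 2 * s ^+ 2)) = (a ^+ 2 * s ^+ 2)^-1 :> R.
    by field; rewrite D0 (gt_eqF s0) (gt_eqF a0).
  have e2 : (deg e w)%:R * (2 * C * u / Z3) / (deg e w)%:R = (2 * C) * u / Z3 :> R.
    by field; rewrite D0 andbT; apply: lt0r_neq0.
  rewrite e1 e2 in h1; apply: (le_trans h1); exact: (Kle _ _ hK3 _ Z3p).
- rewrite (_ : l = (l - 3).+1 + 2)%N; last by rewrite addn2 -addn3 subnK.
  have HB : forall y, srw_mx R e y x <= 2 / (a ^+ 2 * s ^+ 2).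
    move=> y; rewrite mxE; apply: le_trans (Dinv_le (deg e y)%:R b (hD y)).
    rewrite -[leRHS]mul1r ler_wpM2r ?invr_ge0 ?ler0n //.
    by case: (e y x).
  have E0 : 0 <= (8 * C ^+ 2 + 10 * C) * u / Z2.
    by rewrite divr_ge0 ?mulr_ge0 // ltW //; lra.
  have z0 : 0 <= (s ^+ 2)^-1 by rewrite invr_ge0 sqr_ge0.
  have hEx : forall y, y != x -> `|(srw_mx R e ^+ 2) y x - (s ^+ 2)^-1| <=
      (8 * C ^+ 2 + 10 * C) * u / Z2.
    by move=> y ne; apply: hx; rewrite eq_sym.
  have := @Ml_approx R n e degpos (l - 3) w x _ _ _ z0 E0 hEx HB.
  move=> h; apply: (le_trans h).
  have hx6 := extra_bound b.
  apply: (le_trans (lerD (lexx _) hx6)).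
  have hK6 : 8 * C ^+ 2 + 10 * C + 6 <= 8 * C ^+ 2 + 12 * C + 6 by lra.
  have := Kle _ _ hK6 _ Z2p.
  by rewrite !mulrDl.
Qed.
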